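(* There is an absolute constant $K$ such that the following holds. Let $(h(i))_{i\ge 0}$ be a Fibonacci-automatic sequence generated by a Fibonacci-DFAO with $m$ states, and let $c \ge 0$ be an integer. Then there is a Fibonacci-DFAO with at most $K m^2 (c+1)^2$ states generating the shifted sequence $(h(i+c))_{i \ge 0}$.
   Context: Fibonacci numbers $F_0=0,F_1=1,F_k=F_{k-1}+F_{k-2}$; for a binary word $x=x_1\cdots x_\ell$, $[x]=\sum_j x_j F_{\ell-j+2}$; a valid Fibonacci representation is a binary word with no factor $11$ (leading zeros allowed). A Fibonacci-DFAO is a deterministic finite automaton with output $(Q,\{0,1\},\delta,q_0,\Delta,\tau)$ (with $\tau: Q\to\Delta$ the output map and $\delta$ possibly partial) reading valid Fibonacci representations most significant digit first; it has a self-loop on $q_0$ under $0$, so its output does not depend on leading zeros. It generates the sequence $(h(i))_{i\ge0}$ if $h(i) = \tau(\delta(q_0,x))$ for every valid representation $x$ with $[x]=i$. A sequence is Fibonacci-automatic if it is generated by some Fibonacci-DFAO. *)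

(* Defs.v *)
From mathcomp Require Import all_boot.
Set Implicit Arguments. Unset Strict Implicit. Unset Printing Implicit Defensive.

Fixpoint fib (n : nat) : nat :=
  match n with
  | 0 => 0
  | 1 => 1
  | (k.+1 as m).+1 => fib m + fib k
  end.

(* [x] = sum_{j=1}^{l} x_j F_{l-j+2}; with 0-based index j0 = j-1 the
   weight is F_{l - j0 + 1}.  x is read most significant digit first. *)
Definition fibval (x : seq bool) : nat :=
  \sum_(j < size x) nth false x j * fib (size x - j + 1).

Definition fib_valid (x : seq bool) : bool := ~~ infix [:: true; true] x.

Record fdfao (Delta : Type) := FDFAO {
  fstate : finType;
  fdelta : fstate -> bool -> option fstate;
  fq0 : fstate;
  ftau : fstate -> Delta;
  floop0 : fdelta fq0 false = Some fq0
}.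

Definition frun (Delta : Type) (A : fdfao Delta) (x : seq bool) : option (fstate A) :=
  foldl (fun oq b => obind (fun q => fdelta q b) oq) (Some (fq0 A)) x.

Definition generates (Delta : Type) (A : fdfao Delta) (h : nat -> Delta) : Prop :=
  forall x : seq bool, fib_valid x ->
    exists q, frun A x = Some q /\ ftau q = h (fibval x).

Definition nstates (Delta : Type) (A : fdfao Delta) : nat := #|fstate A|.

(* Main.v *)
Require Import Defs.
From mathcomp Require Import all_boot zify.
Set Implicit Arguments. Unset Strict Implicit.

Definition fv' (x : seq bool) : nat :=
  \sum_(j < size x) nth false x j * fib (size x - j).

Lemma fibSS n : fib n.+2 = fib n.+1 + fib n. Proof. by []. Qed.

Lemma nth_rcons_last (x : seq bool) b : nth false (rcons x b) (size x) = b.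
Proof. by rewrite nth_rcons ltnn eqxx. Qed.

Lemma fibval_rcons x b : fibval (rcons x b) = fibval x + fv' x + b.
Proof.
rewrite /fibval /fv' size_rcons big_ord_recr /= nth_rcons_last subSnn /=.
rewrite muln1; congr (_ + _).
rewrite -big_split /=; apply: eq_bigr => i _.
by rewrite nth_rcons ltn_ord subSn ?(ltnW (ltn_ord i)) // addn1 fibSS mulnDr addn1.
Qed.

Lemma fv'_rcons x b : fv' (rcons x b) = fibval x + b.
Proof.
rewrite /fibval /fv' size_rcons big_ord_recr /= nth_rcons_last subSnn /=.
rewrite muln1; congr (_ + _); apply: eq_bigr => i _.
by rewrite nth_rcons ltn_ord subSn ?(ltnW (ltn_ord i)) // addn1.
Qed.

Lemma fibval_nil : fibval [::] = 0. Proof. by rewrite /fibval big_ord0. Qed.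
Lemma fv'_nil : fv' [::] = 0. Proof. by rewrite /fv' big_ord0. Qed.

Lemma fibval_cat w u : fibval (u ++ w) =
  fibval u * fib (size w).+1 + fv' u * fib (size w) + fibval w.
Proof.
elim: w u => [|b w IH] u.
  by rewrite cats0 fibval_nil /= muln1 muln0 !addn0.
have -> : u ++ b :: w = rcons u b ++ w by rewrite -cats1 -catA.
rewrite IH (IH [:: b]) -[[:: b]]/(rcons [::] b) !fibval_rcons !fv'_rcons
  fibval_nil fv'_nil (_ : size (b :: w) = (size w).+1) // fibSS.
lia.
Qed.

Fixpoint nov11 (x : seq bool) : bool :=
  if x is a :: t then ~~ (a && head false t) && nov11 t else true.

Lemma validE x : fib_valid x = nov11 x.
Proof.
rewrite /fib_valid; elim: x => [|a t IH] //=.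
rewrite -IH; case: a; case: t {IH} => [|[] t] //=. by case: t.
Qed.

Lemma nov11_cat u w : nov11 (u ++ w) =
  [&& nov11 u, nov11 w & ~~ (last false u && head false w)].
elim: u => [|a u IH] /=; first by rewrite andbT.
rewrite IH; case: u {IH} => [|a' u] /=;
  case: a; case: (head false w); case: (nov11 w); try case: a';
  try case: (nov11 u); try case: (last a' u); by [].
Qed.

Lemma fibval_cons b w : fibval (b :: w) = b * fib (size w).+2 + fibval w.
Proof.
rewrite -cat1s fibval_cat -[[:: b]]/(rcons [::] b) fibval_rcons fv'_rcons
  fibval_nil fv'_nil fibSS; lia.
Qed.

Lemma fib_le1 n : fib n <= fib n.+1.
Proof. case: n => [|n] //; rewrite fibSS; lia. Qed.

Lemma fibval_lt w : nov11 w -> fibval w < fib (size w).+2 /\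
  (head false w = false -> fibval w < fib (size w).+1).
Proof.
elim: w => [|b w IH]; first by rewrite fibval_nil.
rewrite [nov11 _]/= => /andP [Hh Hw]; have [H1 H2] := IH Hw.
rewrite fibval_cons (_ : size (b :: w) = (size w).+1) // [head _ _]/=.
move: H1 H2; rewrite (fibSS (size w).+1) (fibSS (size w)) => H1 H2.
case: b Hh => Hh.
  split; last by [].
  move: Hh; rewrite andTb => Hh; have := H2 (negbTE Hh); lia.
by split; [lia | move=> _; lia].
Qed.

Fixpoint zeck (L n : nat) : seq bool :=
  if L is L'.+1 then
    if fib L'.+2 <= n then true :: zeck L' (n - fib L'.+2)
    else false :: zeck L' n
  else [::].

Lemma zeckP L n : n < fib L.+2 ->
  [/\ size (zeck L n) = L, nov11 (zeck L n), fibval (zeck L n) = n &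
      (n < fib L.+1 -> head false (zeck L n) = false)].
Proof.
elim: L n => [|L IH] n Hn.
  by move: Hn => /= Hn; split=> //; rewrite fibval_nil; lia.
rewrite [zeck _ _]/=.
case: leqP => Hle.
  have Hn' : n - fib L.+2 < fib L.+1 by move: Hn; rewrite (fibSS L.+1); lia.
  have := fib_le1 L.+1 => Hm.
  have [Hs Hv Hf Hh] := IH (n - fib L.+2) (leq_trans Hn' Hm).
  split; [by rewrite /= Hs | by rewrite /= Hh // Hv | | by lia].
  rewrite fibval_cons Hf Hs; lia.
have [Hs Hv Hf Hh] := IH n Hle.
split; [by rewrite /= Hs | by [] | | by []].
by rewrite fibval_cons Hf.
Qed.

Lemma nseqS_rcons k : nseq k.+1 false = rcons (nseq k false) false.
Proof. by elim: k => [|k IH] //=; rewrite -IH. Qed.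

Lemma fibval_nseq k : fibval (nseq k false) = 0 /\ fv' (nseq k false) = 0.
Proof.
elim: k => [|k [H1 H2]]; first by rewrite fibval_nil fv'_nil.
by rewrite nseqS_rcons fibval_rcons fv'_rcons H1 H2.
Qed.

Lemma nov11_nseq k y : nov11 (nseq k false ++ y) = nov11 y.
Proof. by elim: k. Qed.

Lemma fibval_nseq_cat k y : fibval (nseq k false ++ y) = fibval y.
Proof. by have [H1 H2] := fibval_nseq k; rewrite fibval_cat H1 H2. Qed.

Definition stepo (Delta : Type) (A : fdfao Delta) (oq : option (fstate A)) b :=
  obind (fun q => fdelta q b) oq.

Lemma frun_cat (Delta : Type) (A : fdfao Delta) u w :
  frun A (u ++ w) = foldl (@stepo _ A) (frun A u) w.
Proof. by rewrite /frun foldl_cat. Qed.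

Lemma frun_rcons (Delta : Type) (A : fdfao Delta) u b :
  frun A (rcons u b) = obind (fun q => fdelta q b) (frun A u).
Proof. by rewrite /frun foldl_rcons. Qed.

Section Build.
Variables (Delta : Type) (A : fdfao Delta) (q1 : fstate A).
Hypothesis Hq1 : fdelta (fq0 A) true = Some q1.
Variables (c l : nat).
Local Notation L := l.+1.

Definition Bst : finType := (fstate A * fstate A * L.-tuple bool * bool)%type.

Definition runo (q : fstate A) w := foldl (@stepo _ A) (Some q) w.

Definition Bdelta (st : Bst) (b : bool) : option Bst :=
  let: (qp, qP, s, lb) := st in
  let s1 := thead s in
  match fdelta qp s1, (if ~~ s1 && ~~ lb then fdelta qp true else fdelta qP false) with
  | Some a, Some a' => Some (a, a', [tuple of rcons (behead s) b], s1)
  | _, _ => None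
  end.

Definition st0 : Bst := (fq0 A, q1, [tuple of nseq L false], false).

Lemma Bloop : Bdelta st0 false = Some st0.
Proof.
rewrite /Bdelta /st0 /= (floop0 A) Hq1; congr (Some (_, _, _, _)).
by apply: val_inj; rewrite /= -nseqS_rcons.
Qed.

Definition Btau (st : Bst) : Delta :=
  let: (qp, qP, s, lb) := st in
  let n := fibval s + c in
  if (n < fib L.+2) && (~~ lb || (n < fib L.+1)) then
    odflt (ftau qp) (omap (@ftau _ A) (runo qp (zeck L n)))
  else
    odflt (ftau qp) (omap (@ftau _ A)
       (runo qP (zeck L (n - (fib L.+1 + ~~ lb * fib L))))).

Definition B : fdfao Delta := @FDFAO Delta Bst Bdelta st0 Btau Bloop.

End Build.

Lemma gen_run (Delta : Type) (A : fdfao Delta) h w :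
  generates A h -> nov11 w -> exists q, frun A w = Some q /\ ftau q = h (fibval w).
Proof. by move=> G Hw; apply: G; rewrite validE. Qed.

Lemma Binv (Delta : Type) (A : fdfao Delta) h q1
  (Hq1 : fdelta (fq0 A) true = Some q1) c l :
  generates A h -> forall x, nov11 x ->
  exists qp qP (s : l.+1.-tuple bool) (lb : bool) p P,
    [/\ frun (B Hq1 c l) x = Some (qp, qP, s, lb),
        p ++ s = nseq l.+1 false ++ x, nov11 P, lb = last false p &
      [/\ frun A p = Some qp, frun A P = Some qP,
          fibval P = (fibval p).+1 & fv' P = fv' p + ~~ lb]].
Proof.
move=> G; elim/last_ind => [|x b IH] Hx.
  exists (fq0 A), q1, [tuple of nseq l.+1 false], false, [::], [:: true].
  split; [by [] | by rewrite cats0 | by [] | by [] | ].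
  rewrite -[[:: true]]/(rcons [::] true).
  split; [by [] | by rewrite frun_rcons /= Hq1 | | ];
  by rewrite ?fibval_rcons ?fv'_rcons ?fibval_nil ?fv'_nil.
have Hx' : nov11 x by move: Hx; rewrite -cats1 nov11_cat => /and3P [].
have [qp [qP [s [lb [p [P [HB Hps HP Hlb [Hp HPr Hv Hv']]]]]]]] := IH Hx'.
case: s HB Hps => [[|s1 s'] Hs] //= HB Hps.
have HW : p ++ s1 :: rcons s' b = nseq l.+1 false ++ rcons x b.
  by rewrite -rcons_cons -rcons_cat Hps rcons_cons rcons_cat.
have Hval : nov11 (rcons p s1 ++ rcons s' b).
  by rewrite cat_rcons HW nov11_nseq.
move: (Hval); rewrite nov11_cat => /and3P [Hp1 _ _].
have Hjun : ~~ (lb && s1).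
  by move: Hval; rewrite cat_rcons nov11_cat Hlb => /and3P [_ _].
have [a [Ha _]] := gen_run G Hp1.
rewrite frun_rcons Hp /= in Ha.
pose Pn := if ~~ s1 && ~~ lb then rcons p true else rcons P false.
have HPn : nov11 Pn.
  rewrite /Pn; case: ifP => [/andP [_ Hl] | _]; rewrite -cats1 nov11_cat /=.
    by rewrite -Hlb (negbTE Hl) /= andbT; move: Hp1; rewrite -cats1 nov11_cat => /and3P [].
  by rewrite HP andbF.
have [a' [Ha' _]] := gen_run G HPn.
exists a, a', [tuple of rcons (behead (Tuple Hs)) b], s1, (rcons p s1), Pn.
split=> //.
- rewrite frun_rcons HB /= /Bdelta /=.
  have Ht : thead (Tuple Hs) = s1 by [].
  rewrite Ht Ha; move: Ha'; rewrite /Pn; case: ifP => _;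
    by rewrite frun_rcons ?Hp ?HPr /= => ->.
- by rewrite cat_rcons.
- by rewrite last_rcons.
split=> //.
- by rewrite frun_rcons Hp.
- rewrite /Pn; destruct s1, lb => //=; move: Hv Hv';
  rewrite !fibval_rcons ?fv'_rcons /=; lia.
- rewrite /Pn; destruct s1, lb => //=; move: Hv Hv';
  rewrite !fv'_rcons /=; lia.
Qed.


Lemma arith_shift a b X Y e N1 N2 : X + e * Y <= N1 + N2 ->
  a.+1 * X + (b + e) * Y + (N1 + N2 - (X + e * Y)) = a * X + b * Y + N1 + N2.
Proof. move=> H; rewrite mulSn mulnDl; lia. Qed.

Lemma Btau_eq (Delta : Type) (A : fdfao Delta) c l qp qP s (lb : bool) :
  @Btau _ A c l (qp, qP, s, lb) =
  if (fibval s + c < fib l.+3) && (~~ lb || (fibval s + c < fib l.+2)) then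
    odflt (ftau qp) (omap (@ftau _ A) (runo qp (zeck l.+1 (fibval s + c))))
  else
    odflt (ftau qp) (omap (@ftau _ A)
       (runo qP (zeck l.+1 (fibval s + c - (fib l.+2 + ~~ lb * fib l.+1))))).
Proof. by []. Qed.

Lemma Bgen (Delta : Type) (A : fdfao Delta) h q1
  (Hq1 : fdelta (fq0 A) true = Some q1) c l :
  generates A h -> c < fib l -> generates (B Hq1 c l) (fun i => h (i + c)).
Proof.
move=> G Hc x; rewrite validE => Hx.
have [qp [qP [s [lb [p [P [HB Hps HP Hlb [Hp HPr Hv Hv']]]]]]]] := Binv Hq1 c l G Hx.
exists (qp, qP, s, lb); split=> //.
have Hvps : nov11 (p ++ s) by rewrite Hps nov11_nseq.
move: (Hvps); rewrite nov11_cat => /and3P [Hvp Hvs Hjun].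
have Hfx : fibval x = fibval p * fib l.+2 + fv' p * fib l.+1 + fibval s.
  by rewrite -(fibval_nseq_cat l.+1) -Hps fibval_cat size_tuple.
have [Hs1 Hs2] := fibval_lt Hvs; rewrite size_tuple in Hs1 Hs2.
have F3 : fib l.+3 = fib l.+2 + fib l.+1 by [].
have F2 : fib l.+2 = fib l.+1 + fib l by [].
rewrite (_ : ftau _ = @Btau _ A c l (qp, qP, s, lb)) // Btau_eq Hfx.
move: Hs1 Hs2 Hfx; set fs := fibval _ => Hs1 Hs2 Hfx; clearbody fs. case: ifP => Hcond.
  have Hn : fs + c < fib l.+3 by case/andP: Hcond.
  have [Zs Zv Zf Zh] := zeckP Hn.
  have Hw : nov11 (p ++ zeck l.+1 (fs + c)).
    rewrite nov11_cat Hvp Zv /= -Hlb; move: Hcond; destruct lb => //= /andP [_ Hlt].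
    by rewrite Zh.
  have [q [Hq Hq']] := gen_run G Hw.
  move: Hq; rewrite frun_cat Hp -/(runo _ _) => ->; rewrite /= Hq'.
  by rewrite fibval_cat Zs Zf addnA.
set n := fs + c.
set r := n - (fib l.+2 + ~~ lb * fib l.+1).
have [Hge Hr] : fib l.+2 + ~~ lb * fib l.+1 <= n /\ r < fib l.+2.
  rewrite /r /n; clear r n.
  have := fib_le1 l.+1; have := fib_le1 l.+2.
  destruct lb; rewrite /negb ?orFb ?orTb ?andbT ?mul0n ?mul1n ?addn0 in Hcond *.
    move/negbT: Hcond; rewrite negb_and -!leqNgt.
    by move=> /orP [] H H1 H2; split; lia.
  move/negbT: Hcond; rewrite -!leqNgt.
  by move=> H H1 H2; split; lia.
have Hr' : r < fib l.+3 by have := fib_le1 l.+2; clear -Hr; lia.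
have [Zs Zv Zf Zh] := zeckP Hr'.
have Hw : nov11 (P ++ zeck l.+1 r) by rewrite nov11_cat HP Zv Zh // andbF.
have [q [Hq Hq']] := gen_run G Hw.
move: Hq; rewrite frun_cat HPr -/(runo _ _) => ->; rewrite /= Hq'.
rewrite fibval_cat Zs Zf Hv Hv'; congr h.
move: Hge; rewrite /r /n => Hle; exact: arith_shift.
Qed.

Lemma pow2_fib j : 2 ^ j <= fib j.*2.+1.
Proof.
elim: j => [|j IH] //.
rewrite doubleS expnS (fibSS j.*2.+1) (fibSS j.*2).
have := fib_le1 j.*2; lia.
Qed.

Lemma pow2_bracket c : exists j, c < 2 ^ j /\ 2 ^ j <= (c.+1).*2.
Proof.
elim: c => [|c [j [H1 H2]]]; first by exists 0.
have [Hlt|Hge] := ltnP c.+1 (2 ^ j).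
  by exists j; split=> //; lia.
exists j.+1; rewrite expnS; split; lia.
Qed.

Theorem theorem13 :
  exists K : nat,
    forall (Delta : Type) (h : nat -> Delta) (A : fdfao Delta) (c : nat),
      generates A h ->
      exists B : fdfao Delta,
        nstates B <= K * (nstates A) ^ 2 * c.+1 ^ 2 /\
        generates B (fun i => h (i + c)).
Proof.
exists 32 => Delta h A c G.
have [q1 Hq1] : exists q1, fdelta (fq0 A) true = Some q1.
  have [q [Hq _]] := gen_run G (w := [:: true]) erefl.
  by exists q.
have [j [Hj1 Hj2]] := pow2_bracket c.
exists (B Hq1 c j.*2.+1); split; last first.
  by apply: Bgen G _; apply: leq_trans Hj1 (pow2_fib j).
rewrite /nstates /= !card_prod card_tuple card_bool.
have -> : 2 ^ (j.*2.+2) = 4 * (2 ^ j * 2 ^ j) by rewrite !expnS -expnD addnn; lia.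
move: Hj2; move: (2 ^ j) => X HX.
set m := #|fstate A|.
have HX2 : X * X <= (c.+1).*2 * (c.+1).*2 by apply: leq_mul.
rewrite !expnS expn0 !muln1.
have : m * m * (4 * (X * X)) * 2 <= m * m * (4 * ((c.+1).*2 * (c.+1).*2)) * 2.
  by rewrite leq_mul2r /= leq_mul2l leq_mul2l HX2 !orbT.
lia.
Qed.
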